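(* In the blocking model with S-phase $S=[s,t]$ of length $|S|=t-s$, no more than $\lceil |S|^{-1}\rceil$ critical clusters can persist.
   Context: Cell cycle model: each of finitely many cells has a position $x_i\in[0,1)$ on the normalized cell cycle, viewed as a circle (reaching $1$ means division and restart at $0$; the population is fixed). There is a responsive interval $R=[r,s]$ preceding the S-phase $S=[s,t]$, $0\le r<s<t\le1$. Blocking model with threshold $\tau>0$: all cells move with $dx_i/dt=1$, except that whenever the number of cells in $S$ is at least $\tau$, cells arriving at $s$ are stopped there (blocked from entering $S$) until the number of cells in $S$ drops below $\tau$, at which moment all cells accumulated at $s$ enter $S$ together. A cluster is a group of cells occupying the same position (synchronized); it is critical if it contains at least $\tau$ cells. A critical cluster persists if it continues to exist for all future time along the trajectory. *)

(* Defs.v *)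
From HB Require Import structures.
From mathcomp Require Import all_boot all_order all_algebra.
From mathcomp Require Import reals.
Set Implicit Arguments. Unset Strict Implicit. Unset Printing Implicit Defensive.
Import Order.TTheory GRing.Theory Num.Theory.
Local Open Scope ring_scope.

(* A trajectory is given by lifted (unwrapped)
   phases  y i : R -> R  (time |-> lifted phase); the position of cell i on
   the normalized cell cycle (the circle [0,1)) is the fractional part
   pos (y i T).  Reaching 1 = division and restart at 0. *)

Section Blocking.
Variable R : realType.

Definition pos (v : R) : R := v - (Num.floor v)%:~R.

Variable n : nat.

(* number of cells inside the S-phase at time T.  Cells waiting (blocked)
   at s, or just exiting at t, are not counted: we count positions in the
   open interval (s, t). *)
Definition nS (s t : R) (y : 'I_n -> R -> R) (T : R) : nat :=
  #|[set j : 'I_n | (s < pos (y j T)) && (pos (y j T) < t)]|.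

Definition blocked (tau s t : R) (y : 'I_n -> R -> R) (i : 'I_n) (T : R) : bool :=
  (pos (y i T) == s) && (tau <= (nS s t y T)%:R).

Definition rate (tau s t : R) (y : 'I_n -> R -> R) (i : 'I_n) (T : R) : R :=
  if blocked tau s t y i T then 0 else 1.

Definition blocking_traj (tau s t : R) (y : 'I_n -> R -> R) : Prop :=
  (forall (i : 'I_n) (T : R), 0 < T ->
     forall e : R, 0 < e -> exists2 d : R, 0 < d &
       forall u : R, `|u - T| < d -> `|y i u - y i T| < e) /\
  (forall (i : 'I_n) (T : R), 0 <= T ->
     exists2 d : R, 0 < d &
       forall h : R, 0 < h -> h < d -> y i (T + h) = y i T + h * rate tau s t y i T).

Definition is_cluster (y : 'I_n -> R -> R) (C : {set 'I_n}) (T : R) : Prop :=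
  C != set0 /\ forall i j : 'I_n, i \in C -> j \in C -> pos (y i T) = pos (y j T).

Definition critical_cluster (tau : R) (y : 'I_n -> R -> R) (C : {set 'I_n}) (T : R) : Prop :=
  is_cluster y C T /\ tau <= (#|C|)%:R.

End Blocking.

(* Main.v *)
Require Import Defs.
From HB Require Import structures.
From mathcomp Require Import all_boot all_order all_algebra.
From mathcomp Require Import boolp classical_sets reals.
From mathcomp Require Import ring lra zify.
From Stdlib Require Import Classical.
Import Order.TTheory GRing.Theory Num.Theory.
Local Open Scope ring_scope.
Set Implicit Arguments. Unset Strict Implicit.

Section Gen.
Variable R : realType.

Lemma pos_range (v : R) : 0 <= pos v < 1.
Proof.
rewrite /pos; have h1 := floor_le v; have h2 := floorD1_gt v.
rewrite intrD in h2; apply/andP; split; lra.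
Qed.

Lemma pos_addz (v : R) (m : int) : pos (v + m%:~R) = pos v.
Proof.
rewrite /pos floorDrz ?intr_int // intrKfloor intrD; lra.
Qed.

Lemma pos_intE (v : R) : pos v = v - (Num.floor v)%:~R.
Proof. by []. Qed.

Lemma pos_eqP (u v : R) : pos u = pos v -> exists m : int, u = v + m%:~R.
Proof.
rewrite /pos => h; exists (Num.floor u - Num.floor v); rewrite intrD intrN; lra.
Qed.

Lemma int_01 (m : int) : 0 < (m%:~R : R) -> (m%:~R : R) < 1 -> False.
Proof.
move=> h1 h2.
have a1 : (0 < m)%R by rewrite -(ltr0z R).
have a2 : (m < 1)%R by rewrite -(ltr_int R).
lia.
Qed.

Lemma pos_shift (v h : R) : 0 <= h -> pos v + h < 1 -> pos (v + h) = pos v + h.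
Proof.
move=> h0 h1; rewrite /pos.
have -> : Num.floor (v + h) = Num.floor v.
  apply: floor_def; have := floor_le v; move: h1; rewrite /pos intrD => ? ?.
  apply/andP; split; lra.
lra.
Qed.

Lemma pos_of (z : int) (a : R) : 0 <= a < 1 -> pos (z%:~R + a) = a.
Proof.
move=> /andP[a0 a1]; rewrite addrC pos_addz /pos.
have -> : Num.floor a = 0 by apply: floor_def; rewrite add0r; apply/andP; split; lra.
lra.
Qed.

Lemma creep (a b : R) (P : R -> Prop) : a <= b -> P a ->
  (forall u, a <= u -> u < b -> (forall v, a <= v -> v <= u -> P v) ->
     exists2 d, 0 < d & forall v, u <= v -> v < u + d -> P v) ->
  (forall u, a < u -> u <= b -> (forall v, a <= v -> v < u -> P v) -> P u) ->
  forall v, a <= v -> v <= b -> P v.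
Proof.
move=> ab Pa step clos.
pose E : set R := fun u => a <= u <= b /\ forall v, a <= v -> v <= u -> P v.
have Ea : E a.
  split; first by apply/andP; split; lra.
  by move=> v h1 h2; have -> : v = a by apply/eqP; rewrite eq_le h1 h2.
have hsE : has_sup E.
  split; first by exists a.
  by exists b => u [/andP[_ ub] _].
set M := sup E.
have aM : a <= M by apply: sup_upper_bound.
have Mb : M <= b by apply: ge_sup => //; [exists a | move=> u [/andP[_ ub] _]].
have below : forall v, a <= v -> v < M -> P v.
  move=> v av vM.
  have e0 : 0 < M - v by lra.
  have [e [_ He] ve] := sup_adherent e0 hsE.
  rewrite -/M in ve; by apply: He => //; lra.
have PM : forall v, a <= v -> v <= M -> P v.
  move=> v av vM; case: (ltrP v M) => vM'; first exact: below.
  have -> : v = M by apply/eqP; rewrite eq_le vM vM'.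
  case: (ltrP a M) => aM'; first by apply: clos.
  by have -> : M = a by apply/eqP; rewrite eq_le aM aM'.
move=> v av vb.
case: (ltrP M b) => Mb'.
  have [d d0 Hd] := step M aM Mb' PM.
  pose w := Num.min (M + d / 2) b.
  have wE : E w.
    split; first by apply/andP; split; rewrite /w; [rewrite le_min; apply/andP; split; lra | rewrite ge_min; apply/orP; right].
    move=> x ax xw; case: (lerP x M) => xM; first exact: PM.
    apply: Hd; first lra.
    have : w <= M + d / 2 by rewrite /w ge_min lexx.
    lra.
  have := sup_upper_bound hsE wE; rewrite -/M.
  have : M < w by rewrite /w lt_min; apply/andP; split; lra.
  lra.
apply: PM => //; lra.
Qed.

End Gen.
Section Cont.
Variable R : realType.
Definition ctsAt (g : R -> R) u := forall e, 0 < e -> exists2 d, 0 < d &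
  forall v, `|v - u| < d -> `|g v - g u| < e.
Definition rctsAt (g : R -> R) u := forall e, 0 < e -> exists2 d, 0 < d &
  forall v, u <= v -> v < u + d -> `|g v - g u| < e.

Lemma min_le1 (a b : R) : Num.min a b <= a. Proof. by rewrite ge_min lexx. Qed.
Lemma min_le2 (a b : R) : Num.min a b <= b. Proof. by rewrite ge_min lexx orbT. Qed.
Lemma min_gt0 (a b : R) : 0 < a -> 0 < b -> 0 < Num.min a b.
Proof. by move=> ? ?; rewrite lt_min; apply/andP. Qed.

Lemma ctsAt_rcts g u : ctsAt g u -> rctsAt g u.
Proof.
move=> c e e0; have [d d0 H] := c e e0; exists d => // v h1 h2; apply: H.
rewrite ger0_norm; lra.
Qed.

Lemma ctsAt_sub g1 g2 u : ctsAt g1 u -> ctsAt g2 u -> ctsAt (fun v => g1 v - g2 v) u.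
Proof.
move=> c1 c2 e e0.
have e2 : 0 < e / 2 by lra.
have [d1 d10 H1] := c1 _ e2; have [d2 d20 H2] := c2 _ e2.
exists (Num.min d1 d2); first exact: min_gt0.
move=> v hv; have m1 := min_le1 d1 d2; have m2 := min_le2 d1 d2.
have A := H1 v ltac:(lra); have B := H2 v ltac:(lra).
move: A B; rewrite !ltr_norml => /andP[? ?] /andP[? ?]; apply/andP; split; lra.
Qed.

Lemma rctsAt_sub g1 g2 u : rctsAt g1 u -> rctsAt g2 u -> rctsAt (fun v => g1 v - g2 v) u.
Proof.
move=> c1 c2 e e0.
have e2 : 0 < e / 2 by lra.
have [d1 d10 H1] := c1 _ e2; have [d2 d20 H2] := c2 _ e2.
exists (Num.min d1 d2); first exact: min_gt0.
move=> v hv hv'; have m1 := min_le1 d1 d2; have m2 := min_le2 d1 d2.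
have A := H1 v hv ltac:(lra); have B := H2 v hv ltac:(lra).
move: A B; rewrite !ltr_norml => /andP[? ?] /andP[? ?]; apply/andP; split; lra.
Qed.

Lemma ctsAt_id u : ctsAt id u.
Proof. by move=> e e0; exists e. Qed.

Lemma ctsAt_cst c u : ctsAt (fun _ => c) u.
Proof. by move=> e e0; exists 1 => // v _; rewrite subrr normr0. Qed.

Lemma left_le g a u c : a < u -> ctsAt g u ->
  (forall v, a <= v -> v < u -> g v <= c) -> g u <= c.
Proof.
move=> au cg H; rewrite leNgt; apply/negP => cu.
have e0 : 0 < g u - c by lra.
have [d d0 Hd] := cg _ e0.
pose v := u - Num.min d (u - a) / 2.
have m1 := min_le1 d (u - a); have m2 := min_le2 d (u - a).
have mp : 0 < Num.min d (u - a) by apply: min_gt0; lra.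
have := H v ltac:(rewrite /v; lra) ltac:(rewrite /v; lra).
have hv : `|v - u| < d.
  rewrite /v (_ : u - Num.min d (u - a) / 2 - u = - (Num.min d (u - a) / 2)); last by ring.
  rewrite normrN ger0_norm; lra.
have := Hd v hv; rewrite ltr_norml => /andP[? ?]; lra.
Qed.

Lemma left_eq g a u : a < u -> ctsAt g u ->
  (forall v, a <= v -> v < u -> g v = 0) -> g u = 0.
Proof.
move=> au cg H; apply/eqP; rewrite eq_le; apply/andP; split.
  by apply: (@left_le g a u 0 au cg) => v h1 h2; move: (H v h1 h2) => E; lra.
have cg' : ctsAt (fun v => 0 - g v) u := ctsAt_sub (ctsAt_cst 0 u) cg.
have := @left_le _ a u 0 au cg' ltac:(by move=> v h1 h2; move: (H v h1 h2) => E; lra).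
lra.
Qed.

Lemma right_lt g u c : rctsAt g u -> g u < c ->
  exists2 d, 0 < d & forall v, u <= v -> v < u + d -> g v < c.
Proof.
move=> cg gu; have e0 : 0 < c - g u by lra.
have [d d0 Hd] := cg _ e0; exists d => // v h1 h2.
by move: (Hd v h1 h2); rewrite ltr_norml => /andP[? ?]; lra.
Qed.

End Cont.
Section Model.
Variables (R : realType) (n : nat) (tau s t : R) (y : 'I_n -> R -> R).
Hypotheses (s0 : 0 < s) (hst : s < t) (ht1 : t <= 1) (htau : 0 < tau)
  (traj : blocking_traj tau s t y).

Local Notation rt := (rate tau s t y).

Lemma rate_cases i T : rt i T = 0 \/ rt i T = 1.
Proof. by rewrite /rate; case: ifP; auto. Qed.

Lemma rate_free i T : pos (y i T) != s -> rt i T = 1.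
Proof. by rewrite /rate /blocked => /negbTE ->. Qed.

Lemma stepV i u : 0 <= u -> exists2 d, 0 < d &
  forall v, u < v -> v < u + d -> y i v = y i u + (v - u) * rt i u.
Proof.
move=> u0; have [d d0 H] := traj.2 i u u0; exists d => // v h1 h2.
have := H (v - u) ltac:(lra) ltac:(lra).
by rewrite (_ : u + (v - u) = v); last by ring.
Qed.

Lemma y_rcts i u : 0 <= u -> rctsAt (y i) u.
Proof.
move=> u0 e e0; have [d d0 H] := stepV i u0.
exists (Num.min d e); first exact: min_gt0.
move=> v h1 h2; have m1 := min_le1 d e; have m2 := min_le2 d e.
case: (lerP v u) => vu.
  have -> : v = u by apply/eqP; rewrite eq_le vu h1.
  by rewrite subrr normr0.
rewrite (H v vu ltac:(lra)).
rewrite (_ : y i u + (v - u) * rt i u - y i u = (v - u) * rt i u); last by ring.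
case: (rate_cases i u) => ->; first by rewrite mulr0 normr0.
rewrite mulr1 ger0_norm; lra.
Qed.

Lemma y_cts i u : 0 < u -> ctsAt (y i) u.
Proof. by move=> u0 e e0; have [d d0 H] := traj.1 i u u0 e e0; exists d. Qed.

Lemma lin_rcts (c : R) u : rctsAt (fun v => c + (v - u)) u.
Proof.
apply: ctsAt_rcts => e e0; exists e => // v hv.
by rewrite (_ : c + (v - u) - (c + (u - u)) = v - u); last by ring.
Qed.

Lemma lin_cts (c w : R) u : ctsAt (fun v => c + (v - w)) u.
Proof.
move=> e e0; exists e => // v hv.
by rewrite (_ : c + (v - w) - (c + (u - w)) = v - u); last by ring.
Qed.

Lemma free_run i e D : 0 <= e -> 0 < D -> rt i e = 1 ->
  (forall h, 0 < h -> h < D -> pos (y i e + h) != s) ->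
  forall v, e <= v -> v <= e + D -> y i v = y i e + (v - e).
Proof.
move=> e0 D0 r1 nos.
apply: (@creep R e (e + D) (fun v => y i v = y i e + (v - e))).
- lra.
- by rewrite subrr addr0.
- move=> u h1 h2 Hu.
  have Pu := Hu u h1 (lexx u).
  have ru : rt i u = 1.
    case: (lerP u e) => ue.
      by have -> : u = e by apply/eqP; rewrite eq_le ue h1.
    by apply: rate_free; rewrite Pu; apply: nos; lra.
  have [d d0 Hd] := stepV i (le_trans e0 h1).
  exists d => // v v1 v2.
  case: (lerP v u) => vu.
    by have -> : v = u by apply/eqP; rewrite eq_le vu v1.
  rewrite (Hd v vu v2) ru Pu; ring.
- move=> u h1 h2 Hu.
  have u0 : 0 < u by lra.
  have := @left_eq R (fun v => y i v - (y i e + (v - e))) e u h1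
    (ctsAt_sub (y_cts i u0) (lin_cts (y i e) e u)).
  move=> /(_ ltac:(by move=> v v1 v2; rewrite (Hu v v1 v2) subrr)) E; lra.
Qed.

Lemma pos_diff_int (u v : R) : pos u = s -> pos v = s -> 0 < v - u -> v - u < 1 -> False.
Proof.
move=> hu hv h1 h2; have [m hm] := pos_eqP (etrans hv (esym hu)).
by apply: (@int_01 R m); lra.
Qed.

Lemma free_rev i e : 0 <= e -> pos (y i e) = s -> rt i e = 1 ->
  forall v, e <= v -> v <= e + 1 -> y i v = y i e + (v - e).
Proof.
move=> e0 pe r1; apply: free_run => // h h0 h1; apply/eqP => E.
by apply: (@pos_diff_int (y i e) (y i e + h)) => //; lra.
Qed.


Lemma right_band (g : R -> R) (u lo hi : R) : rctsAt g u -> lo < g u -> g u < hi ->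
  exists2 d, 0 < d & forall v, u <= v -> v < u + d -> lo < g v /\ g v < hi.
Proof.
move=> cg h1 h2.
have e0 : 0 < Num.min (g u - lo) (hi - g u) by apply: min_gt0; lra.
have [d d0 Hd] := cg _ e0; exists d => // v v1 v2.
have m1 := min_le1 (g u - lo) (hi - g u); have m2 := min_le2 (g u - lo) (hi - g u).
by move: (Hd v v1 v2); rewrite ltr_norml => /andP[? ?]; split; lra.
Qed.

Lemma find_entry i (a b sg : R) : 0 <= a -> a <= b -> y i a <= sg -> sg < y i b ->
  exists u, [/\ a <= u, u < b, y i u = sg & rt i u = 1].
Proof.
move=> a0 ab ya yb; apply: NNPP => H.
suff key : forall v, a <= v -> v <= b -> y i v <= sg.
  by have := key b ab (lexx b); lra.
apply: (@creep R a b (fun v => y i v <= sg)) => //.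
- move=> u h1 h2 Hu; have Pu := Hu u h1 (lexx u).
  have u0 : 0 <= u by lra.
  case: (ltrP (y i u) sg) => yu.
    have [d d0 Hd] := right_lt (y_rcts i u0) yu.
    by exists d => // v v1 v2; apply/ltW/Hd.
  have E : y i u = sg by apply/eqP; rewrite eq_le Pu yu.
  have r0 : rt i u = 0.
    case: (rate_cases i u) => // r1; exfalso; apply: H; exists u; split => //.
  have [d d0 Hd] := stepV i u0; exists d => // v v1 v2.
  case: (lerP v u) => vu.
    by have -> : v = u by apply/eqP; rewrite eq_le vu v1.
  by rewrite (Hd v vu v2) r0 mulr0 addr0 E.
- move=> u h1 h2 Hu; have u0 : 0 < u by lra.
  exact: (@left_le R (y i) a u sg h1 (y_cts i u0)).
Qed.

Lemma reach_aux (v : R) : pos v != s -> exists dl, [/\ 0 < dl, dl < 1 & pos (v + dl) = s].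
Proof.
move=> ps; have S0 := s0; have Sst := hst; have St1 := ht1.
have [p0 p1] : 0 <= pos v /\ pos v < 1 by case/andP: (pos_range v).
have hv : v = (Num.floor v)%:~R + pos v by rewrite /pos; ring.
case: (lerP (pos v) s) => hps.
  have hps' : pos v < s by rewrite lt_neqAle hps ps.
  exists (s - pos v); split; [lra | lra |].
  rewrite (_ : v + (s - pos v) = (Num.floor v)%:~R + s); last by rewrite {1}hv; ring.
  by apply: pos_of; apply/andP; split; lra.
exists (1 + s - pos v); split; [lra | lra |].
rewrite (_ : v + (1 + s - pos v) = (Num.floor v + 1)%:~R + s); last by rewrite {1}hv intrD; ring.
by apply: pos_of; apply/andP; split; lra.
Qed.

Lemma reach i (T : R) : 0 <= T -> exists2 d, 0 <= d /\ d < 1 & pos (y i (T + d)) = s.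
Proof.
move=> T0.
case: (eqVneq (pos (y i T)) s) => ps.
  by exists 0; [split; lra | rewrite addr0].
have [dl [d0 d1 pd]] := reach_aux ps.
exists dl; first by split; lra.
have r1 := rate_free ps.
have := @free_run i T dl T0 d0 r1.
move=> /(_ _ (T + dl) _ _) ->.
- by rewrite (_ : y i T + (T + dl - T) = y i T + dl); last by ring.
- move=> h h0 h1; apply/eqP => E.
  apply: (@pos_diff_int (y i T + h) (y i T + dl)) => //; lra.
- lra.
- lra.
Qed.

Section Clusters.
Variables (T0 : R) (k : nat) (C : 'I_k -> {set 'I_n}) (rep : 'I_k -> 'I_n).
Hypotheses (hT0 : 0 <= T0) (rep_in : forall a, rep a \in C a)
  (crit : forall a : 'I_k, critical_cluster tau y (C a) T0)
  (persist : forall (a : 'I_k) (T : R), T0 <= T -> is_cluster y (C a) T)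
  (distinct : forall (a b : 'I_k), a != b -> forall T : R, T0 <= T ->
      forall i j : 'I_n, i \in C a -> j \in C b -> pos (y i T) != pos (y j T)).

Definition ent a u := [/\ T0 <= u, pos (y (rep a) u) = s & rt (rep a) u = 1].

Lemma pos_ne a b T : a != b -> T0 <= T -> pos (y (rep a) T) != pos (y (rep b) T).
Proof. by move=> ab hT; apply: (distinct ab hT (rep_in a) (rep_in b)). Qed.

Lemma same_pos a j T : j \in C a -> T0 <= T -> pos (y j T) = pos (y (rep a) T).
Proof. by move=> jC hT; have [_ H] := persist a hT; apply: H. Qed.

Lemma spacing a b u v : a != b -> ent a u -> ent b v -> u <= v -> u + (t - s) <= v.
Proof.
move=> ab [ua pa ra] [vb pb rb] uv; have S0 := s0; have Sst := hst; have St1 := ht1.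
have HT0 := hT0.
rewrite leNgt; apply/negP => vlt.
case: (lerP v u) => vu.
  have E : u = v by apply/eqP; rewrite eq_le uv vu.
  rewrite -E in pb vb; by move: (pos_ne ab vb); rewrite pa pb eqxx.
have u0 : 0 <= u by lra.
have Hz := @free_rev (rep a) u u0 pa ra v uv ltac:(lra).
have pv : pos (y (rep a) v) = s + (v - u).
  by rewrite Hz pos_shift ?pa //; lra.
have card : (#|C a| <= nS s t y v)%N.
  rewrite /nS; apply: subset_leq_card; apply/fintype.subsetP => j jC; rewrite inE.
  rewrite (same_pos jC vb) pv; apply/andP; split; lra.
have bl : blocked tau s t y (rep b) v.
  rewrite /blocked pb eqxx /=; apply: le_trans (crit a).2 _; by rewrite ler_nat.
by move: rb; rewrite /rate bl => /eqP; rewrite eq_sym oner_eq0.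
Qed.


Lemma nonint a X v : X != a -> T0 <= v -> forall m : int, y (rep a) v - y (rep X) v != m%:~R.
Proof.
move=> Xa hv m; apply/eqP => E.
have aX : a != X by rewrite eq_sym.
have : pos (y (rep a) v) = pos (y (rep X) v).
  rewrite (_ : y (rep a) v = y (rep X) v + m%:~R); first exact: pos_addz.
  by rewrite -E; ring.
by move/eqP; apply/negP; apply: pos_ne.
Qed.

Lemma revolution a e X : ent a e -> X != a -> exists u, [/\ e < u, u < e + 1 & ent X u].
Proof.
move=> [ea pa ra] Xa; have HT0 := hT0; have e0 : 0 <= e by lra.
have Hz := free_rev e0 pa ra.
have [m [h1 h2]] : exists m : int,
    m%:~R < y (rep a) e - y (rep X) e /\ y (rep a) e - y (rep X) e < m%:~R + 1.
  exists (Num.floor (y (rep a) e - y (rep X) e)); split.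
    rewrite lt_neqAle floor_le andbT eq_sym; exact: nonint.
  by have := floorD1_gt (y (rep a) e - y (rep X) e); rewrite intrD.
have band : forall v, e <= v -> v <= e + 1 ->
    m%:~R < y (rep a) v - y (rep X) v /\ y (rep a) v - y (rep X) v < m%:~R + 1.
  apply: (@creep R e (e + 1) (fun v => m%:~R < y (rep a) v - y (rep X) v /\
             y (rep a) v - y (rep X) v < m%:~R + 1)).
  - lra.
  - by split.
  - move=> u u1 u2 Hu; have [b1 b2] := Hu u u1 (lexx u).
    have u0 : 0 <= u by lra.
    exact: (right_band (rctsAt_sub (y_rcts (rep a) u0) (y_rcts (rep X) u0)) b1 b2).
  - move=> u u1 u2 Hu; have u0 : 0 < u by lra.
    have cd := ctsAt_sub (y_cts (rep a) u0) (y_cts (rep X) u0).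
    have c1 := @left_le R (fun v => y (rep a) v - y (rep X) v) e u (m%:~R + 1) u1 cd
       ltac:(by move=> v v1 v2; have [? ?] := Hu v v1 v2; lra).
    have c2 := @left_le R (fun v => 0 - (y (rep a) v - y (rep X) v)) e u (- m%:~R) u1
       (ctsAt_sub (ctsAt_cst 0 u) cd)
       ltac:(by move=> v v1 v2; have [? ?] := Hu v v1 v2; lra).
    have uT : T0 <= u by lra.
    have n1 := nonint Xa uT m; have n2 := nonint Xa uT (m + 1).
    rewrite intrD in n2.
    simpl in c1, c2.
    split.
      by rewrite lt_neqAle eq_sym n1 /=; lra.
    by rewrite lt_neqAle n2 /=; lra.
have [b1 b2] := band e (lexx e) ltac:(lra).
have [b3 b4] := band (e + 1) ltac:(lra) (lexx _).
have He1 := Hz (e + 1) ltac:(lra) (lexx _).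
have psg : pos (y (rep a) e - m%:~R) = s.
  rewrite (_ : y (rep a) e - m%:~R = y (rep a) e + (- m)%:~R); first by rewrite pos_addz.
  by rewrite intrN.
have ee1 : e <= e + 1 by lra.
have [u [u1 u2 yu ru]] := @find_entry (rep X) e (e + 1) (y (rep a) e - m%:~R) e0 ee1
  ltac:(lra) ltac:(lra).
case: (lerP u e) => ue.
  have E : u = e by apply/eqP; rewrite eq_le ue u1.
  by move: yu; rewrite E => yu; lra.
exists u; split => //; split => //; first lra.
by rewrite yu.
Qed.

Lemma stay a : ~ (exists e, ent a e) -> pos (y (rep a) (T0 + 1)) = s.
Proof.
move=> H; have HT0 := hT0.
have [d [d0 d1] pd] := reach (rep a) HT0.
have key : forall v, T0 + d <= v -> v <= T0 + 1 -> y (rep a) v = y (rep a) (T0 + d).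
  apply: (@creep R (T0 + d) (T0 + 1) (fun v => y (rep a) v = y (rep a) (T0 + d))) => //.
  - lra.
  - move=> u u1 u2 Hu; have Pu := Hu u u1 (lexx u).
    have u0 : 0 <= u by lra.
    have r0 : rt (rep a) u = 0.
      case: (rate_cases (rep a) u) => // r1; exfalso; apply: H; exists u; split => //.
        lra.
      by rewrite Pu.
    have [d' d0' Hd] := stepV (rep a) u0; exists d' => // v v1 v2.
    case: (lerP v u) => vu.
      by have -> : v = u by apply/eqP; rewrite eq_le vu v1.
    by rewrite (Hd v vu v2) r0 mulr0 addr0 Pu.
  - move=> u u1 u2 Hu; have u0 : 0 < u by lra.
    have := @left_eq R (fun v => y (rep a) v - y (rep a) (T0 + d)) (T0 + d) u u1
      (ctsAt_sub (y_cts (rep a) u0) (ctsAt_cst _ u)).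
    move=> /(_ ltac:(by move=> v v1 v2; rewrite (Hu v v1 v2) subrr)) E; lra.
by rewrite key ?pd //; lra.
Qed.

Lemma initial (a b : 'I_k) : a != b -> exists X e, ent X e.
Proof.
move=> ab; apply: NNPP => H; have HT0 := hT0.
have Ha : ~ exists e, ent a e by move=> [e he]; apply: H; exists a, e.
have Hb : ~ exists e, ent b e by move=> [e he]; apply: H; exists b, e.
have hT : T0 <= T0 + 1 by lra.
by have := pos_ne ab hT; rewrite (stay Ha) (stay Hb) eqxx.
Qed.

Lemma spread (kk : nat) (f : 'I_kk -> R) (L x : R) m : forall S : {set 'I_kk},
  #|S| = m.+1 -> (forall a, a \in S -> x <= f a) ->
  (forall a b, a \in S -> b \in S -> a != b -> f a <= f b -> f a + L <= f b) ->
  exists2 a, a \in S & x + m%:R * L <= f a.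
Proof.
elim: m => [|m IH] S cS lo sp.
  have [a aS] : exists a, a \in S by apply/set0Pn; rewrite -card_gt0 cS.
  by exists a => //; rewrite mul0r addr0; apply: lo.
have [a aS] : exists a, a \in S by apply/set0Pn; rewrite -card_gt0 cS.
case: (arg_maxP f aS) => a0 a0S' amax.
have a0S : a0 \in S by exact: a0S'.
have cS' : #|S :\ a0| = m.+1.
  by move: cS; rewrite (cardsD1 a0) a0S add1n => -[].
have [b bS hb] := IH (S :\ a0) cS'
  ltac:(by move=> c; rewrite in_setD1 => /andP[_ cS0]; apply: lo)
  ltac:(by move=> c c'; rewrite !in_setD1 => /andP[_ ?] /andP[_ ?]; apply: sp).
move: bS; rewrite in_setD1 => /andP[ba0 bS].
have fb : f b <= f a0 := amax b bS.
have := sp b a0 bS a0S ba0 fb.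
exists a0 => //; rewrite mulrSr mulrDl mul1r; lra.
Qed.

Lemma bound : (1 < k)%N -> (k.-1)%:R * (t - s) < 1.
Proof.
move=> hk; have k0 : (0 < k)%N by apply: ltn_trans hk.
have a01 : (Ordinal k0 : 'I_k) != Ordinal hk by [].
have [X0 [e0 he0]] := initial a01.
have [f hf] : exists f : 'I_k -> R, forall X, [/\ e0 <= f X, f X < e0 + 1 & ent X (f X)].
  apply: (fin_all_exists (U := fun _ => R) (P := fun X u => [/\ e0 <= u, u < e0 + 1 & ent X u])) => X; case: (eqVneq X X0) => [->|XX].
    by exists e0; split => //; lra.
  have [u [u1 u2 hu]] := revolution he0 XX; exists u; split => //; lra.
have sp : forall a b, a \in [set: 'I_k] -> b \in [set: 'I_k] -> a != b ->
    f a <= f b -> f a + (t - s) <= f b.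
  move=> a b _ _ ab fab; have [_ _ ha] := hf a; have [_ _ hb] := hf b.
  exact: spacing ab ha hb fab.
have cT : #|[set: 'I_k]| = (k.-1).+1 by rewrite cardsT card_ord prednK.
have [a _ ha] := @spread k f (t - s) e0 k.-1 [set: 'I_k] cT
  (fun a _ => let: And3 h _ _ := hf a in h) sp.
have [_ ha2 _] := hf a; lra.
Qed.

End Clusters.
End Model.

Theorem mainTheorem3 (R : realType) (n : nat) (tau r s t : R)
  (y : 'I_n -> R -> R)
  (hr : 0 <= r) (hrs : r < s) (hst : s < t) (ht1 : t <= 1) (htau : 0 < tau)
  (traj : blocking_traj tau s t y)
  (T0 : R) (hT0 : 0 <= T0) (k : nat) (C : 'I_k -> {set 'I_n})
  (crit : forall a : 'I_k, critical_cluster tau y (C a) T0)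
  (persist : forall (a : 'I_k) (T : R), T0 <= T -> is_cluster y (C a) T)
  (distinct : forall (a b : 'I_k), a != b -> forall T : R, T0 <= T ->
      forall i j : 'I_n, i \in C a -> j \in C b -> pos (y i T) != pos (y j T)) :
  (k%:Z <= Num.ceil ((t - s)^-1))%R.
Proof.
have s0 : 0 < s by lra.
have L0 : 0 < t - s by lra.
have nz : t - s != 0 by rewrite (gt_eqF L0).
have Linv : (t - s)^-1 * (t - s) = 1 by rewrite mulVf.
have Ipos : 0 < (t - s)^-1 by rewrite invr_gt0.
have hb : (k.-1)%:R * (t - s) < 1.
  case: (leqP k 1) => hk.
    have -> : k.-1 = 0%N by case: (k) hk => [|[|]].
    by rewrite mul0r ltr01.
  have [rep rep_in] : exists rep : 'I_k -> 'I_n, forall a, rep a \in C a.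
    apply: (fin_all_exists (U := fun _ => 'I_n) (P := fun a i => i \in C a)) => a.
    have [[ne _] _] := crit a; by apply/set0Pn.
  exact: (bound s0 hst ht1 traj hT0 rep_in crit persist distinct hk).
have hlt : (k.-1)%:R < (t - s)^-1 by nra.
have hce : (k.-1)%:Z < Num.ceil ((t - s)^-1).
  rewrite ltNge; apply/negP; rewrite ceil_le_int => h.
  have E : ((k.-1)%:Z)%:~R = (k.-1)%:R :> R by [].
  rewrite E in h; lra.
have : (k <= (k.-1).+1)%N by case: (k).
lia.
Qed.
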